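(* Let $M\ge1$ and $k\in\mathfrak{L}_M$. Then \[ V(k):=\beta(\kappa^{-1}(k))=\bigl\{b\in\mathbb{Z}^{M+1}\,\bigl|\,\min\{\mathbb{1},\tilde{k}\}\leq b\leq\min\{k,\tilde{k}\}\bigr\}; \] equivalently, $V(k)=V_0\times V_1\times\cdots\times V_M$, where $V_n=\bigl\{\min\{1,\tilde{k}_n\},\min\{1,\tilde{k}_n\}+1,\ldots,\min\{k_n,\tilde{k}_n\}\bigr\}$ for $0\leq n\leq M$.
   Context: Fix depths $z_{-1}<z_0<\cdots<z_M$. A (reflection) scattering sequence is a finite sequence $\mathsf{p}=(\mathsf{p}_0,\ldots,\mathsf{p}_L)$ with $L\geq 2$, $\mathsf{p}_0=\mathsf{p}_L=z_{-1}$, $\mathsf{p}_i\in\{z_0,\ldots,z_M\}$ for $1\le i\le L-1$, and for every $0\le i\le L-1$ there is $-1\le j\le M-1$ with $\{\mathsf{p}_i,\mathsf{p}_{i+1}\}=\{z_j,z_{j+1}\}$; $\mathsf{S}_M$ is the set of these. For $\mathsf{p}\in\mathsf{S}_M$ and $0\le n\le M$, let $k_n$ be the number of maximal runs of consecutive indices $i$ with $\mathsf{p}_i\in\{z_n,\ldots,z_M\}$, and $b_n$ the number of those runs of length at least $2$ (equivalently, containing an index $i$ with $\mathsf{p}_i=z_{n+1}$). Then $\kappa(\mathsf{p})=(k_0,\ldots,k_M)$ (transit count vector) and $\beta(\mathsf{p})=(b_0,\ldots,b_M)$ (branch count vector), so $\kappa,\beta:\mathsf{S}_M\to\mathbb{Z}^{M+1}$.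 $\mathfrak{L}_M=\{(k_0,\ldots,k_M)\in\mathbb{Z}_{\ge0}^{M+1}: k_0=1\text{ and for all }n\le M-1,\ k_n=0\Rightarrow k_{n+1}=0\}$. For $k=(k_0,\ldots,k_M)$, $\tilde{k}=(k_1,\ldots,k_M,0)$; $\mathbb{1}=(1,\ldots,1)$; $\min$ and $\le$ are entrywise. *)

(* Defs.v *)
From HB Require Import structures.
From mathcomp Require Import all_boot all_order all_algebra.
Set Implicit Arguments. Unset Strict Implicit. Unset Printing Implicit Defensive.
Import Order.TTheory GRing.Theory Num.Theory.

(* Depths z_{-1} < z_0 < ... < z_M are encoded by their index shifted by one:
   the natural number j+1 stands for z_j, so 0 stands for z_{-1} and
   M.+1 stands for z_M.  Only the order/adjacency structure of the depths
   matters for the definitions below. *)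

Definition adjacent (x y : nat) : bool := (x == y.+1) || (y == x.+1).

Definition scattering (M : nat) (p : seq nat) : Prop :=
  [/\ 3 <= size p,                          (* L >= 2 *)
      nth 0 p 0 = 0, last 0 p = 0,
      (forall i, 0 < i < (size p).-1 -> 0 < nth 0 p i <= M.+1)
    & (forall i, i < (size p).-1 -> adjacent (nth 0 p i) (nth 0 p i.+1))].

Fixpoint run_lengths (s : seq bool) : seq nat :=
  match s with
  | [::] => [::]
  | true :: t =>
      let r := run_lengths t in
      match t with
      | true :: _ => (head 0 r).+1 :: behead r
      | _ => 1 :: r
      end
  | false :: t => run_lengths t
  end.

(* Maximal runs of indices i with p_i in {z_n,...,z_M}. *)
Definition runs_at (n : nat) (p : seq nat) : seq nat :=
  run_lengths [seq n.+1 <= x | x <- p].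

Definition transit_n (n : nat) (p : seq nat) : nat := size (runs_at n p).
Definition branch_n (n : nat) (p : seq nat) : nat :=
  count (fun l => 2 <= l) (runs_at n p).

Definition kappa (M : nat) (p : seq nat) : M.+1.-tuple int :=
  [tuple Posz (transit_n i p) | i < M.+1].
Definition beta (M : nat) (p : seq nat) : M.+1.-tuple int :=
  [tuple Posz (branch_n i p) | i < M.+1].

Definition in_LM (M : nat) (k : M.+1.-tuple int) : Prop :=
  (forall n : 'I_M.+1, 0 <= tnth k n)%R /\
  nth 0%R k 0 = 1%R /\
  (forall n, n < M -> nth 0%R k n = 0%R -> nth 0%R k n.+1 = 0%R).

(* k~ = (k_1,...,k_M,0):  its n-th entry. *)
Definition ktilde (M : nat) (k : M.+1.-tuple int) (n : nat) : int :=
  nth 0%R k n.+1.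

Definition V (M : nat) (k : M.+1.-tuple int) : M.+1.-tuple int -> Prop :=
  fun b => exists p, scattering M p /\ kappa M p = k /\ beta M p = b.

(* Main.v *)
Require Import Defs.
From HB Require Import structures.
From mathcomp Require Import all_boot all_order all_algebra zify.
Import Order.TTheory GRing.Theory Num.Theory.

Fixpoint starts (pr : bool) (s : seq bool) : nat :=
  match s with [::] => 0 | x :: t => (~~ pr && x) + starts x t end.
Fixpoint longs (pr : bool) (s : seq bool) : nat :=
  match s with
  | x :: ((y :: _) as t) => [&& ~~ pr, x & y] + longs x t
  | _ => 0 end.

Lemma rl_TT t : run_lengths (true :: true :: t) =
  (head 0 (run_lengths (true :: t))).+1 :: behead (run_lengths (true :: t)).
Proof. by []. Qed.
Lemma rl_TF t : run_lengths (true :: false :: t) = 1 :: run_lengths t.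
Proof. by []. Qed.
Lemma rl_F t : run_lengths (false :: t) = run_lengths t.
Proof. by []. Qed.

Lemma rl_true_nil t : run_lengths (true :: t) != [::].
Proof. by case: t => [|[] t]. Qed.

Lemma rl_head_pos t : 0 < head 0 (run_lengths (true :: t)).
Proof. by case: t => [|[] t]. Qed.

Lemma size_rl s : size (run_lengths s) = starts false s.
Proof.
elim: s => [|x t IH] //. case: x; last by rewrite rl_F IH /=; case: t {IH} => [|[] t] /=.
case: t IH => [|[] t] IH //.
  rewrite rl_TT. have := rl_true_nil t. case E: (run_lengths (true :: t)) => [|h r] //= _.
  by move: IH; rewrite E /= => ->.
by rewrite rl_TF /= IH.
Qed.

Lemma count_rl s : count (fun l => 2 <= l) (run_lengths s) = longs false s.
Proof.
elim: s => [|x t IH] //. case: x; last first.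
  by rewrite rl_F IH; case: t {IH} => [|[] [|[] t]] /=.
case: t IH => [|[] t] IH //.
  rewrite rl_TT. have := rl_head_pos t. have := rl_true_nil t.
  case E: (run_lengths (true :: t)) => [|h r] //= _ hp.
  move: IH; rewrite E /= => IH.
  case: t E IH => [|y t] E IH /=.
    by move: E => [] <- <-.
  case: y E IH => E IH /=.
    have h2 : 1 < h.
      move: E; rewrite rl_TT; case=> <- _. by have := rl_head_pos t.
    move: IH => /=. rewrite h2. lia.
  move: E; rewrite rl_TF; case=> Eh Er; subst h. move: IH => /=. case: t Er => [|y t] Er /=; lia.
Qed.

Fixpoint ups (n x : nat) (p : seq nat) : nat :=
  match p with [::] => 0 | y :: t => ((x == n) && (y == n.+1)) + ups n y t end.
Fixpoint triples (n x : nat) (p : seq nat) : nat :=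
  match p with
  | y :: ((z :: _) as t) => [&& x == n, y == n.+1 & z == n.+2] + triples n y t
  | _ => 0 end.

Lemma starts_map n x p : path adjacent x p ->
  starts (n.+1 <= x) [seq n.+1 <= y | y <- p] = ups n x p.
Proof.
elim: p x => [|y t IH] x //= /andP [hxy hp]. rewrite IH //.
congr (_ + _). move: hxy; rewrite /adjacent.
case: (ltngtP x n) => [h|h|->]; case: (ltngtP y n.+1) => [h'|h'|->] //=; lia.
Qed.

Lemma longs_map n x p : path adjacent x p ->
  longs (n.+1 <= x) [seq n.+1 <= y | y <- p] = triples n x p.
Proof.
elim: p x => [|y t IH] x //= /andP [hxy hp].
case: t IH hp => [|z t] IH hp //. rewrite -IH // [map _ _]/= /=. congr (_ + _).
move: hp => /= /andP [hyz _]. move: hxy hyz; rewrite /adjacent.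
case: (ltngtP x n) => [h|h|->]; case: (ltngtP y n.+1) => [h'|h'|->] //=;
  case: (ltngtP z n.+2) => [h''|h''|->] //=; lia.
Qed.

Lemma transit_ups n p : path adjacent 0 p -> transit_n n (0 :: p) = ups n 0 p.
Proof. move=> h; rewrite /transit_n /runs_at /= size_rl -starts_map //. Qed.

Lemma branch_triples n p : path adjacent 0 p -> branch_n n (0 :: p) = triples n 0 p.
Proof. move=> h; rewrite /branch_n /runs_at /= count_rl -longs_map //. Qed.

Lemma triples_cons2 n x y z t : triples n x (y :: z :: t) =
  [&& x == n, y == n.+1 & z == n.+2] + triples n y (z :: t).
Proof. by []. Qed.
Lemma ups_cons n x y t : ups n x (y :: t) = ((x == n) && (y == n.+1)) + ups n y t.
Proof. by []. Qed.

Lemma triples_le_ups_aux n x y t : triples n x (y :: t) <= ups n.+1 y t.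
Proof.
elim: t x y => [|z t IH] x y //. rewrite triples_cons2 ups_cons.
have := IH y z. move: (triples _ _ _) (ups _ _ _) => a b.
case: (x == n) => /=; case: (y == n.+1) => /=; case: (z == n.+2) => /=; lia.
Qed.

Lemma triples_le_ups n x p : triples n x p <= ups n.+1 x p.
Proof.
case: p => [|y t] //. apply: leq_trans (triples_le_ups_aux n x y t) _.
by rewrite /= leq_addl.
Qed.

Lemma triples_mono n x y t : triples n y t <= triples n x (y :: t).
Proof. by case: t => [|z t] //=; rewrite leq_addl. Qed.

Lemma triples_pos n x p : path adjacent x p -> x <= n -> 0 < ups n.+1 x p ->
  0 < triples n x p.
Proof.
move: {2}(size p) (leqnn (size p)) => N. elim: N x p => [|N IH] x [|y t] // hs.
move=> /andP [hxy hp] hx. rewrite ups_cons (_ : (x == n.+1) = false) ?add0n; last first.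
  by apply/negbTE; rewrite neq_ltn ltnS hx.
move=> hu.
have hy : y <= n.+1 by move: hxy; rewrite /adjacent => /orP [] /eqP H; lia.
case: (ltngtP y n.+1) hy => // [hyn|hyn] _.
  apply: leq_trans (triples_mono n x y t). apply: IH => //; rewrite /= in hs; lia.
subst y. have hxn : x = n by move: hxy; rewrite /adjacent => /orP [] /eqP H; lia.
subst x. case: t hs hp hu => [|z t] // hs /andP [hyz hp] hu.
have [Ez|Ez] : z = n \/ z = n.+2 by move: hyz; rewrite /adjacent => /orP [] /eqP H; lia.
  subst z. apply: leq_trans (triples_mono n n n.+1 (n :: t)).
  apply: leq_trans (triples_mono n n.+1 n t).
  apply: IH => //; first by rewrite /= in hs; lia.
  move: hu; rewrite !ups_cons (_ : (n == n.+2) = false) //; lia.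
by subst z; rewrite triples_cons2 !eqxx.
Qed.

Lemma triples_top M x p : all (fun v => v <= M.+1) p -> triples M x p = 0.
Proof.
elim: p x => [|y t IH] x // /andP [hy ht].
case: t IH ht => [|z t] IH ht //. rewrite triples_cons2 IH //. move: ht => /= /andP [hz _].
rewrite (_ : (z == M.+2) = false) ?andbF //. lia.
Qed.

Lemma scat_inv M p : scattering M p ->
  exists p', [/\ p = 0 :: p', path adjacent 0 p' & all (fun v => v <= M.+1) p'].
Proof.
case=> hs h0 hl hin hadj. case: p hs h0 hl hin hadj => [|x p'] // hs /= h0 hl hin hadj.
subst x. exists p'; split => //.
  apply/(pathP 0) => i hi. exact: hadj.
apply/(all_nthP 0) => i hi.
have [hlt|hge] := ltnP i.+1 (size p').
  by have := hin i.+1 => /=; lia.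
have -> : i = (size p').-1 by lia.
move: hl. rewrite /= (last_nth 0) /=. case: p' hs hi hin hadj hge => [|y q] //= _ _ _ _ _ ->.
by [].
Qed.

Lemma dir1 M p n : scattering M p ->
  [/\ branch_n n p <= transit_n n p, branch_n n p <= transit_n n.+1 p,
      0 < transit_n n.+1 p -> 0 < branch_n n p & branch_n M p = 0].
Proof.
move=> /scat_inv [p' [-> hp ha]].
rewrite !transit_ups // !branch_triples //; split.
- rewrite -branch_triples // -transit_ups //. exact: count_size.
- exact: triples_le_ups.
- by move=> h; apply: triples_pos.
- exact: triples_top.
Qed.

Definition mk (n : nat) (g : seq (seq nat)) : seq nat :=
  n.+1 :: flatten [seq r ++ [:: n.+1] | r <- g].

Definition groups (c K : nat) (rs : seq (seq nat)) : seq (seq (seq nat)) :=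
  if c is c'.+1 then [seq [:: r] | r <- take c' rs] ++ drop c' rs :: nseq (K - c) [::]
  else nseq K [::].

Definition RL (m : nat) (L : seq (seq nat)) : seq nat :=
  flatten [seq run_lengths [seq m.+1 <= x | x <- r] | r <- L].

Definition good (M n : nat) (r : seq nat) : bool :=
  [&& r != [::], head 0 r == n.+1, last 0 r == n.+1,
      all (fun x => n.+1 <= x <= M.+1) r & path adjacent (head 0 r) (behead r)].

Lemma flatten_nseq_nil (T : Type) k : flatten (nseq k ([::] : seq T)) = [::].
Proof. by elim: k. Qed.

Lemma flatten_groups c K rs : (c = 0 -> rs = [::]) -> flatten (groups c K rs) = rs.
Proof.
case: c => [h|c _] /=; first by rewrite h; elim: K.
rewrite flatten_cat /= flatten_nseq_nil cats0. rewrite -[in RHS](cat_take_drop c rs). congr (_ ++ _).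
by elim: (take c rs) => //= x s ->.
Qed.

Lemma size_groups c K rs : c <= K -> c <= size rs -> size (groups c K rs) = K.
Proof.
case: c => [|c] h h' /=; first by rewrite size_nseq.
rewrite size_cat /= size_map size_nseq size_take. rewrite h'; lia.
Qed.

Lemma count_groups c K rs : c <= size rs ->
  count (fun g => g != [::]) (groups c K rs) = c.
Proof.
case: c => [|c] h /=; first by elim: K.
rewrite count_cat count_map /=.
have -> : count (fun g => g != [::]) (nseq (K - c.+1) [::] : seq (seq (seq nat))) = 0.
  by elim: (K - c.+1).
have -> : drop c rs != [::] by rewrite -size_eq0 size_drop subn_eq0 -ltnNge.
rewrite (eq_count (a2 := predT)) // count_predT size_take h; lia.
Qed.

Lemma rl_cat_false s t : run_lengths (s ++ false :: t) = run_lengths s ++ run_lengths t.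
Proof.
elim: s => [|x s IH] //. case: x; last by rewrite /= IH.
case: s IH => [|[] s] IH //.
  change (run_lengths (true :: true :: (s ++ false :: t)) =
    run_lengths (true :: true :: s) ++ run_lengths t).
  rewrite rl_TT.
  change (run_lengths (true :: (s ++ false :: t))) with (run_lengths ((true :: s) ++ false :: t)).
  rewrite IH rl_TT.
  have := rl_true_nil s. by case: (run_lengths (true :: s)) => [|h r].
change (1 :: run_lengths (s ++ false :: t) = (1 :: run_lengths s) ++ run_lengths t).
by rewrite -[run_lengths (s ++ _)]/(run_lengths ((false :: s) ++ false :: t)) IH.
Qed.

Lemma rl_all_true s : all id s -> s != [::] -> run_lengths s = [:: size s].
Proof.
elim: s => [|x s IH] // /andP [hx hs] _. have -> : x = true by [].
case: s IH hs => [|y s] IH hs //. have hy : y = true by case/andP: hs.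
subst y. by rewrite rl_TT IH.
Qed.

Lemma rl_good M n r : good M n r -> run_lengths [seq n.+1 <= x | x <- r] = [:: size r].
Proof.
case/and5P => hne _ _ hall _. rewrite (@rl_all_true [seq n.+1 <= x | x <- r]) ?size_map //.
  rewrite all_map; apply: sub_all hall => x /= /andP [] //.
by case: r hne {hall}.
Qed.

Lemma RL_good M n L : all (good M n) L -> RL n L = map size L.
Proof.
elim: L => [|r L IH] // /andP [hr hL]. rewrite /RL map_cons /= -/(RL n L) IH //.
by rewrite (rl_good _ _ _ hr).
Qed.

Lemma RL_cat m a b : RL m (a ++ b) = RL m a ++ RL m b.
Proof. by rewrite /RL map_cat flatten_cat. Qed.

Lemma rl_mk n m g : n < m -> run_lengths [seq m.+1 <= x | x <- mk n g] = RL m g.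
Proof.
move=> hnm. rewrite /mk map_cons (_ : (m < n.+1) = false); last by lia.
rewrite rl_F. elim: g => [|r g IH] //. rewrite map_cons [flatten (_ :: _)]/= -catA map_cat.
rewrite [map _ (_ :: _)]/= (_ : (m < n.+1) = false); last by lia.
rewrite rl_cat_false IH. by rewrite /RL map_cons [flatten (_ :: _)]/=.
Qed.

Lemma RL_cons m r L : RL m (r :: L) = run_lengths [seq m.+1 <= x | x <- r] ++ RL m L.
Proof. by []. Qed.

Lemma RL_mk n m G : n < m -> RL m (map (mk n) G) = RL m (flatten G).
Proof.
move=> hnm. elim: G => [|g G IH] //. rewrite map_cons RL_cons IH rl_mk //.
by rewrite -RL_cat.
Qed.

Lemma size_mk n g : (2 <= size (mk n g)) = (g != [::]).
Proof. case: g => [|r g] //=. rewrite !size_cat /=. lia. Qed.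

Lemma last_flat (a : nat) g : last a (flatten [seq r ++ [:: a] | r <- g]) = a.
Proof. elim: g => [|r g IH] //=. by rewrite last_cat last_cat /= IH. Qed.

Lemma good_mk M n g : n <= M -> all (good M n.+1) g -> good M n (mk n g).
Proof.
move=> hn hg. apply/and5P; split => //=.
- by rewrite last_flat.
- rewrite leqnn ltnS hn /=.
  elim: g hg => [|r g IH] // /andP [hr hg].
  rewrite map_cons [flatten _]/= !all_cat IH // andbT /=. apply/andP; split; last by apply/andP; split; lia.
  case/and5P: hr => _ _ _ hall _. apply: sub_all hall => x /andP [h1 h2]. lia.
- elim: g hg => [|r g IH] // /andP [hr hg].
  rewrite map_cons [flatten _]/= -catA cat_path.
  case/and5P: hr; case: r => [|y r] // _ /eqP hy /eqP hl _ hp. rewrite /= in hy hl hp.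
  subst y. rewrite /= {1}/adjacent eqxx orbT hp /= hl /adjacent eqxx /=. exact: IH.
Qed.

Fixpoint levs (M : nat) (kn bn : nat -> nat) (d : nat) : seq (seq nat) :=
  match d with
  | 0 => nseq (kn M) [:: M.+1]
  | d'.+1 => map (mk (M - d'.+1)) (groups (bn (M - d'.+1)) (kn (M - d'.+1)) (levs M kn bn d'))
  end.

Definition Lv M kn bn n := levs M kn bn (M - n).

Lemma Lv_step M kn bn n : n < M ->
  Lv M kn bn n = map (mk n) (groups (bn n) (kn n) (Lv M kn bn n.+1)).
Proof.
move=> h. rewrite /Lv (_ : M - n = (M - n.+1).+1); last by lia.
rewrite /=. by rewrite (_ : M - (M - n.+1).+1 = n); last by lia.
Qed.

Lemma Lv_inv M kn bn
  (hb : forall n, n < M -> [/\ bn n <= kn n, bn n <= kn n.+1 & (0 < kn n.+1 -> 0 < bn n)])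
  (hbM : bn M = 0) n : n <= M ->
  [/\ size (Lv M kn bn n) = kn n, all (good M n) (Lv M kn bn n),
      count (fun r => 2 <= size r) (Lv M kn bn n) = bn n &
      forall m, n <= m <= M -> RL m (Lv M kn bn n) = map size (Lv M kn bn m)].
Proof.
move=> hn. have -> : n = M - (M - n) by lia. move: (M - n) (leq_subr n M) => d {hn n}.
elim: d => [|d IH] hd.
  rewrite subn0 /Lv subnn /=. split.
  - by rewrite size_nseq.
  - elim: (kn M) => //= k ->. by rewrite andbT /good /= eqxx leqnn.
  - by rewrite hbM; elim: (kn M).
  - move=> m hm. have -> : m = M by lia. rewrite subnn /=. apply: (RL_good M).
    elim: (kn M) => //= k ->. by rewrite andbT /good /= eqxx leqnn.
have [Hs Hg Hc HR] := IH (ltnW hd).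
set n := M - d.+1. have En : M - d = n.+1 by rewrite /n; lia.
rewrite En in Hs Hg Hc HR.
have hnM : n < M by rewrite /n; lia.
have [h1 h2 h3] := hb n hnM.
have hsz : bn n <= size (Lv M kn bn n.+1) by rewrite Hs.
have hfl : flatten (groups (bn n) (kn n) (Lv M kn bn n.+1)) = Lv M kn bn n.+1.
  apply: flatten_groups => h0. apply/eqP; rewrite -size_eq0 Hs.
  case: (kn n.+1) h3 => // k; rewrite h0; by move/(_ isT).
rewrite Lv_step //. split.
- by rewrite size_map size_groups.
- rewrite all_map. apply/allP => g hg /=. apply: good_mk; first exact: ltnW.
  apply/allP => r hr. apply: (allP Hg). rewrite -hfl. apply/flattenP. by exists g.
- rewrite count_map (eq_count (a2 := fun g => g != [::])); last by move=> g /=; rewrite size_mk.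
  exact: count_groups.
- move=> m /andP [hm1 hm2]. have [<-|hlt] := eqVneq n m.
    rewrite -Lv_step //. apply: (RL_good M). rewrite Lv_step // all_map.
    apply/allP => g hg /=. apply: good_mk; first exact: ltnW.
    apply/allP => r hr. apply: (allP Hg). rewrite -hfl. apply/flattenP. by exists g.
  rewrite RL_mk; last by rewrite ltn_neqAle hlt.
  rewrite hfl. apply: HR. rewrite hm2 andbT ltn_neqAle hlt hm1 //.
Qed.

Lemma runs_p m R0 : runs_at m (0 :: R0 ++ [:: 0]) = RL m [:: R0].
Proof.
rewrite /runs_at map_cons map_cat map_cons.
change (m.+1 <= 0) with false. rewrite rl_F rl_cat_false RL_cons.
by [].
Qed.

Lemma scat_p M R0 : good M 0 R0 -> scattering M (0 :: R0 ++ [:: 0]).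
Proof.
case/and5P => hne /eqP hh /eqP hl hall hp.
have hpath : path adjacent 0 (R0 ++ [:: 0]).
  rewrite cat_path hl. case: R0 hne hh hl hall hp => [|y q] // _ /= hy _ _ hq.
  by subst y; rewrite hq.
split.
- rewrite /= size_cat /=. case: R0 hne {hh hl hall hp hpath} => //= *; lia.
- by [].
- by rewrite /= last_cat hl.
- case=> [|i] // hi. rewrite /= size_cat /= addn1 ltnS in hi.
  rewrite [nth _ _ _]/= nth_cat hi. have := (all_nthP 0 hall) i hi. by case/andP=> h1 h2; rewrite h2 andbT.
- move: hpath => /(pathP 0) hP i hi. exact: hP.
Qed.

Theorem proposition1 (M : nat) (hM : 1 <= M) (k : M.+1.-tuple int)
    (hk : in_LM k) (b : M.+1.-tuple int) :
  V k b <->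
  (forall n : 'I_M.+1,
     (Order.min 1%R (ktilde k n) <= tnth b n)%R /\
     (tnth b n <= Order.min (tnth k n) (ktilde k n))%R).
Proof.
split.
  case=> p [hs [hk' hb']] n.
  have [d1 d2 d3 d4] := dir1 M p n hs.
  have Eb : tnth b n = Posz (branch_n n p) by rewrite -hb' /beta tnth_mktuple.
  have Ek : tnth k n = Posz (transit_n n p) by rewrite -hk' /kappa tnth_mktuple.
  rewrite Eb Ek /ktilde.
  have [hlt|hge] := ltnP n M.
    have h' : n.+1 < M.+1 by [].
    rewrite -hk' -(tnth_nth 0%R (kappa M p) (Ordinal h')) /kappa tnth_mktuple /=.
    move: d1 d2 d3; move: (branch_n _ _) (transit_n _ _) (transit_n _ _) => x y z. lia.
  have -> : nth 0%R k n.+1 = 0%R by rewrite nth_default // size_tuple.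
  have hn : (n : nat) = M by have := ltn_ord n; lia.
  rewrite hn d4. move: (transit_n _ _) => y. lia.
move=> H. case: hk => hk0 [hk1 hkz].
have hk0' : forall i, i <= M -> (0 <= nth 0%R k i)%R.
  move=> i hi. have := hk0 (Ordinal (hi : i < M.+1)). by rewrite (tnth_nth 0%R).
have hkM : nth 0%R k M.+1 = 0%R by rewrite nth_default // size_tuple.
have hH : forall i, i <= M ->
    (Order.min 1%R (nth 0%R k i.+1) <= nth 0%R b i)%R /\
    (nth 0%R b i <= Order.min (nth 0%R k i) (nth 0%R k i.+1))%R.
  move=> i hi. have := H (Ordinal (hi : i < M.+1)). by rewrite /ktilde !(tnth_nth 0%R).
set kn := fun i => absz (nth 0%R k i).
set bn := fun i => absz (nth 0%R b i).
have hb : forall n, n < M -> [/\ bn n <= kn n, bn n <= kn n.+1 & (0 < kn n.+1 -> 0 < bn n)].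
  move=> n hn. have := hH n (ltnW hn). have := hk0' n (ltnW hn). have := hk0' n.+1 hn.
  rewrite /bn /kn. move: (nth 0%R k n) (nth 0%R k n.+1) (nth 0%R b n) => x y z.
  move=> *; split; lia.
have hbM : bn M = 0.
  have := hH M (leqnn M). rewrite hkM /bn. move: (nth 0%R b M) (nth 0%R k M) => x y. lia.
have hkn0 : kn 0 = 1 by rewrite /kn hk1.
have [Hs0 Hg0 _ HR0] := Lv_inv M kn bn hb hbM 0 (leq0n M).
move: Hs0 Hg0 HR0. case E: (Lv M kn bn 0) => [|R0 [|R1 L]] //; rewrite hkn0 // => _.
rewrite /= andbT => hg0 HR0.
exists (0 :: R0 ++ [:: 0]). split; first exact: scat_p.
have hbpos : forall i, i <= M -> (0 <= nth 0%R b i)%R.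
  move=> i hi. have := hH i hi. have [hlt|hge] := ltnP i M.
    have := hk0' i.+1 hlt. move: (nth 0%R k i.+1) (nth 0%R b i) (nth 0%R k i) => x y z. lia.
  have -> : i = M by lia. rewrite hkM. move: (nth 0%R b M) (nth 0%R k M) => x y. lia.
split; apply: eq_from_tnth => i; rewrite tnth_mktuple (tnth_nth 0%R).
  have [Hs _ _ _] := Lv_inv M kn bn hb hbM i (ltnSE (ltn_ord i)).
  rewrite /transit_n runs_p HR0; last by have := ltn_ord i; lia.
  rewrite size_map Hs /kn. have := hk0' i (ltnSE (ltn_ord i)). move: (nth _ _ _) => x. lia.
have [_ _ Hc _] := Lv_inv M kn bn hb hbM i (ltnSE (ltn_ord i)).
rewrite /branch_n runs_p HR0; last by have := ltn_ord i; lia.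
rewrite count_map Hc /bn. have := hbpos i (ltnSE (ltn_ord i)). move: (nth _ _ _) => x. lia.
Qed.
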